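(* Assume $M$ has genus zero and $a+b=1$ (so $a,b\in(0,1)$). Let $p=\frac{q'}{q'+a^{-1}-1}$. Then the marginal law of $\omega$ under $\mathbf P$ is $$\mathbf P(\omega)\propto (qq')^{k(\omega)}p^{|\omega|}(1-p)^{|\mathsf E\setminus\omega|},\qquad\omega\subseteq\mathsf E,$$ i.e. the $\mathrm{FK}(qq')$ random cluster model on $\mathsf G$ with parameter $p$ and free boundary conditions.
   Context: $M$ is the sphere or the plane. Let $\mathsf G=(\mathsf V,\mathsf E)$ be a finite connected graph embedded in $M$ with all faces topological discs, and $\mathsf G^*=(\mathsf U,\mathsf E^* )$ its embedded dual ($\mathsf U$ = faces of $\mathsf G$); $e^*$ is the dual edge crossing $e$, $\xi^*=\{e^*:e\in\xi\}$. Fix integers $q,q'\ge1$, finite $Q,Q'\subset\mathbb C$ with $Q=-Q$, $Q'=-Q'$, $|Q|=q$, $|Q'|=q'$, and $a,b\in(0,1]$. For $\sigma:\mathsf V\to Q$, $\eta(\sigma)\subseteq\mathsf E^*$ is the set of $e^*$ whose primal $e$ has endpoints with different $\sigma$-values; for $\sigma':\mathsf U\to Q'$, $\eta(\sigma')\subseteq\mathsf E$ is the set of $e$ whose dual $e^*$ has endpoints with different $\sigma'$-values. $\mathbf P(\sigma,\sigma')\propto a^{|\eta(\sigma')|}b^{|\eta(\sigma)|}$ on $\Sigma=\{(\sigma,\sigma'):\eta(\sigma)^*\cap\eta(\sigma')=\emptyset\}$. Percolation (here for $a+b=1$): given $(\sigma,\sigma')$, every edge of $\eta(\sigma')$ and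 every dual edge of $\eta(\sigma)$ is open; for each pair $(e,e^* )$ with $e\notin\eta(\sigma')$, $e^*\notin\eta(\sigma)$, independently, $e$ is open and $e^*$ closed with probability $1-b=a$, and $e$ closed and $e^*$ open with probability $1-a=b$. $\omega\subseteq\mathsf E$ is the set of open primal edges; $\mathbf P$ denotes the joint law. $k(\omega)$ is the number of connected components of $(\mathsf V,\omega)$, isolated vertices included. *)

(* Defs.v *)
From HB Require Import structures.
From mathcomp Require Import all_boot all_order all_fingroup all_algebra.
From mathcomp Require Import complex.
From mathcomp Require Import reals.
Set Implicit Arguments. Unset Strict Implicit. Unset Printing Implicit Defensive.
Import Order.TTheory GRing.Theory Num.Theory.
Local Open Scope ring_scope.

(* Cellularly embedded graphs in an orientable surface, encoded combinatorially
   by a rotation system (Heffter-Edmonds).  Edges are a finType [Ed]; each edge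
   e has two darts (e,true),(e,false); [dflip] exchanges them.  [rot] is the
   rotation (cyclic order of darts around each vertex); vertices are the
   orbits of [rot] (represented by the type [Vx] with the map [vert]); faces
   are the orbits of [rot \o dflip] (type [Fc], map [face]).  The primal edge e
   joins vert (e,true) and vert (e,false); the dual edge e^* joins the two
   faces face (e,true), face (e,false) on the two sides of e.  The degenerate
   one-vertex edgeless graph is allowed separately.  Genus zero (sphere /
   plane) is expressed by Euler's formula |V| - |E| + |U| = 2.                *)

Definition dflip (T : Type) (d : (T * bool)%type) : (T * bool)%type := (d.1, ~~ d.2).

Definition face_perm (T : finType) (rot : {perm ((T * bool)%type)}) (d : (T * bool)%type) :=
  rot (dflip d).

Definition adj_in (E V : finType) (vert : (E * bool)%type -> V) (w : {set E}) : rel V :=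
  fun x y => [exists e in w,
    ((vert (e, true) == x) && (vert (e, false) == y)) ||
    ((vert (e, false) == x) && (vert (e, true) == y))].

Record planar_map := PlanarMap {
  Ed : finType;
  Vx : finType;
  Fc : finType;
  rot : {perm ((Ed * bool)%type)};
  vert : (Ed * bool)%type -> Vx;
  face : (Ed * bool)%type -> Fc;
  vert_orbits : forall d d', vert d = vert d' <-> fconnect rot d d';
  face_orbits : forall d d', face d = face d' <-> fconnect (face_perm rot) d d';
  covering : (forall v, exists d, vert d = v) /\ (forall u, exists d, face d = u)
             \/ [/\ #|Ed| = 0%N, #|Vx| = 1%N & #|Fc| = 1%N];
  connected : forall x y : Vx, connect (adj_in vert [set: Ed]) x y;
  genus_zero : (#|Vx| + #|Fc| = #|Ed| + 2)%N
}.

Section Model.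
Variable (R : realType) (G : planar_map).
Variables (Q Q' : seq R[i]) (a b : R).

Definition spinV := {ffun Vx G -> seq_sub Q}.
Definition spinF := {ffun Fc G -> seq_sub Q'}.

(* eta(sigma): edges e whose dual e^* lies in eta(sigma), i.e. the endpoints
   of the primal edge e carry different sigma-values. *)
Definition etaV (s : spinV) : {set Ed G} :=
  [set e | s (vert (e, true)) != s (vert (e, false))].
Definition etaF (s' : spinF) : {set Ed G} :=
  [set e | s' (face (e, true)) != s' (face (e, false))].

(* joint (unnormalised) weight of (sigma, sigma', omega):
   a^{|eta(sigma')|} b^{|eta(sigma)|} on Sigma, times the percolation
   probabilities of the free pairs: edges of eta(sigma') are open, edges whose
   dual is in eta(sigma) are closed, the others open w.p. a, closed w.p. b. *)
Definition joint_weight (s : spinV) (s' : spinF) (w : {set Ed G}) : R :=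
  if [&& [disjoint etaV s & etaF s'], etaF s' \subset w & [disjoint w & etaV s]]
  then a ^+ #|etaF s'| * b ^+ #|etaV s|
       * a ^+ #|w :\: etaF s'| * b ^+ #|~: w :\: etaV s|
  else 0.

Definition joint_total : R :=
  \sum_(s : spinV) \sum_(s' : spinF) \sum_(w : {set Ed G}) joint_weight s s' w.

Definition omega_marginal (w : {set Ed G}) : R :=
  (\sum_(s : spinV) \sum_(s' : spinF) joint_weight s s' w) / joint_total.
End Model.

Definition ncomp (G : planar_map) (w : {set Ed G}) : nat :=
  #|[set x : Vx G | fingraph.root (adj_in (@vert G) w) x == x]|.

Definition rc_weight (R : realType) (G : planar_map) (Qc : nat) (p : R)
  (w : {set Ed G}) : R :=
  Qc%:R ^+ ncomp w * p ^+ #|w| * (1 - p) ^+ #|~: w|.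

Definition rc_law (R : realType) (G : planar_map) (Qc : nat) (p : R)
  (w : {set Ed G}) : R :=
  rc_weight Qc p w / \sum_(w' : {set Ed G}) rc_weight Qc p w'.

(* Main.v *)
Require Import Defs.
From HB Require Import structures.
From mathcomp Require Import all_boot all_order all_fingroup all_algebra.
From mathcomp Require Import complex.
From mathcomp Require Import reals.
From mathcomp Require Import zify ring lra.
Import Order.TTheory GRing.Theory Num.Theory.
Set Implicit Arguments. Unset Strict Implicit. Unset Printing Implicit Defensive.

Lemma connect_ind_gen (T : finType) (e : rel T) (P : T -> Prop) x :
  P x -> (forall y z, P y -> e y z -> P z) -> forall y, connect e x y -> P y.
Proof.
move=> Px st y /connectP[p pth ->]; elim: p x Px pth => //= z p IH x Px /andP[exz pz].
exact: IH (st _ _ Px exz) pz.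
Qed.

Lemma root_ext (T : finType) (e e' : rel T) :
  connect e =2 connect e' -> fingraph.root e =1 fingraph.root e'.
Proof. by move=> h x; rewrite /fingraph.root; congr odflt; apply: eq_pick => y; exact: h. Qed.

Section Gen.
Variables (E V : finType) (vm : (E * bool)%type -> V).

Definition kc (A : {set E}) := #|[set x | fingraph.root (adj_in vm A) x == x]|.

Lemma adj_sym A : symmetric (adj_in vm A).
Proof.
move=> x y; apply/existsP/existsP => -[e /andP[eA h]]; exists e; rewrite eA /=;
  by case/orP: h => /andP[-> ->]; rewrite ?orbT.


Qed.

Lemma csym A : connect_sym (adj_in vm A).
Proof. exact: sym_connect_sym (adj_sym A). Qed.

Definition eadj e x y :=
  ((vm (e, true) == x) && (vm (e, false) == y)) ||
  ((vm (e, false) == x) && (vm (e, true) == y)).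

Lemma adj_add A e x y :
  adj_in vm (e |: A) x y = adj_in vm A x y || eadj e x y.
Proof.
apply/existsP/orP => [[e' /andP[]]|].
  rewrite in_setU1 => /orP[/eqP->|e'A] h; first by right.
  by left; apply/existsP; exists e'; rewrite e'A.
case=> [/existsP[e' /andP[e'A h]]|h].
  by exists e'; rewrite in_setU1 e'A orbT.
by exists e; rewrite setU11.
Qed.

Local Notation cc A := (connect (adj_in vm A)).

Lemma split_connect A e u v :
  connect (adj_in vm (e |: A)) u v ->
  connect (adj_in vm A) u v \/
  ((connect (adj_in vm A) u (vm (e, true)) \/ connect (adj_in vm A) u (vm (e, false))) /\
   (connect (adj_in vm A) v (vm (e, true)) \/ connect (adj_in vm A) v (vm (e, false)))).
Proof.
have sy := csym A.
move: v; apply: (@connect_ind_gen _ _ (fun v => cc A u v \/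
  ((cc A u (vm (e, true)) \/ cc A u (vm (e, false))) /\
   (cc A v (vm (e, true)) \/ cc A v (vm (e, false)))))); first by left; exact: connect0.
move=> y z Py; rewrite adj_add => /orP[a|].
  have cyz : cc A y z by exact: connect1.
  case: Py => [h|[h1 h2]]; first by left; exact: connect_trans h cyz.
  right; split=> //; rewrite sy in cyz.
  by case: h2 => h2; [left|right]; exact: connect_trans cyz h2.
rewrite /eadj => /orP[] /andP[/eqP ey /eqP ez]; subst y z.
- have c0 : cc A (vm (e, false)) (vm (e, false)) by exact: connect0.
  case: Py => [h|[h1 h2]]; right; split; by [left | right | ].
- have c0 : cc A (vm (e, true)) (vm (e, true)) by exact: connect0.
  case: Py => [h|[h1 h2]]; right; split; by [left | right | ].
Qed.

Lemma connect_add_eq A e :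
  connect (adj_in vm A) (vm (e, true)) (vm (e, false)) ->
  connect (adj_in vm (e |: A)) =2 connect (adj_in vm A).
Proof.
move=> cxy u v; apply/idP/idP => [/split_connect|].
  have sy := csym A.
  case=> [//|[[h1|h1] [h2|h2]]].
  - by apply: connect_trans h1 _; rewrite sy.
  - by apply: connect_trans h1 _; apply: connect_trans cxy _; rewrite sy.
  - by apply: connect_trans h1 _; rewrite sy in cxy; apply: connect_trans cxy _; rewrite sy.
  - by apply: connect_trans h1 _; rewrite sy.
apply: connect_sub => x y h; apply: connect1; rewrite adj_add h //.
Qed.

Lemma kc_add_eq A e :
  connect (adj_in vm A) (vm (e, true)) (vm (e, false)) ->
  kc (e |: A) = kc A.
Proof.
move=> cxy; rewrite /kc; apply: eq_card => x; rewrite !inE.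
by rewrite (root_ext (connect_add_eq cxy)).
Qed.

Lemma kc_add_le A e : (kc A <= (kc (e |: A)).+1)%N.
Proof.
rewrite /kc.
set rA := [set x | fingraph.root (adj_in vm A) x == x].
set r' := [set x | fingraph.root (adj_in vm (e |: A)) x == x].
set ry := fingraph.root (adj_in vm A) (vm (e, false)).
have syA := csym A; have sy' := csym (e |: A).
have inj : {in rA :\ ry &, injective (fingraph.root (adj_in vm (e |: A)))}.
  move=> r1 r2; rewrite !inE => /andP[n1 /eqP e1] /andP[n2 /eqP e2].
  move/(fingraph.rootP sy')/split_connect.
  have noy : forall r, r != ry -> fingraph.root (adj_in vm A) r = r ->
      ~ connect (adj_in vm A) r (vm (e, false)).
    by move=> r nr er /(fingraph.rootP syA); rewrite er => h; rewrite h eqxx in nr.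
  case=> [/(fingraph.rootP syA)|[[h1|h1] [h2|h2]]].
  - by rewrite e1 e2.
  - by rewrite -e1 -e2; apply/(fingraph.rootP syA); apply: connect_trans h1 _; rewrite syA.
  - by case: (noy _ n2 e2 h2).
  - by case: (noy _ n1 e1 h1).
  - by case: (noy _ n1 e1 h1).
have sub : fingraph.root (adj_in vm (e |: A)) @: (rA :\ ry) \subset r'.
  by apply/subsetP => z /imsetP[x _ ->]; rewrite inE fingraph.root_root.
rewrite (cardsD1 ry rA).
have := subset_leq_card sub; rewrite card_in_imset //.
by case: (ry \in rA) => /= h; rewrite ?add1n ?add0n ?ltnS // ltnW.
Qed.

Variable T : finType.

Definition goodf (A : {set E}) (s : {ffun V -> T}) :=
  [forall e in A, s (vm (e, true)) == s (vm (e, false))].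

Lemma count_good A : #|[set s | goodf A s]| = (#|T| ^ kc A)%N.
Proof.
have sy := csym A.
pose rt := fingraph.root (adj_in vm A).
pose Rt := {x : V | rt x == x}.
pose phi (g : {ffun Rt -> T}) : {ffun V -> T} :=
  [ffun x => g (exist _ (rt x) (introT eqP (fingraph.root_root sy x)))].
have phi_inj : injective phi.
  move=> g1 g2 h; apply/ffunP => r.
  have := congr1 (fun f : {ffun V -> T} => f (val r)) h; rewrite !ffunE.
  have -> : exist (fun x => rt x == x) (rt (val r)) (introT eqP (fingraph.root_root sy (val r))) = r.
    by apply: val_inj => /=; apply/eqP; exact: (valP r).
  by [].
have img : [set s | goodf A s] = phi @: setT.
  apply/setP => s; rewrite inE; apply/idP/imsetP.
    move=> gs; exists [ffun r : Rt => s (val r)] => //; apply/ffunP => x.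
    rewrite !ffunE /=.
    have : connect (adj_in vm A) x (rt x) by exact: fingraph.connect_root.
    apply: (@connect_ind_gen _ _ (fun z => s x = s z)) => // y z -> /existsP[e /andP[eA h]].
    have := forallP gs e; rewrite eA /= => /eqP hs.
    by case/orP: h => /andP[/eqP <- /eqP <-].

  move=> [g _ ->]; apply/forallP => e; apply/implyP => eA; rewrite !ffunE.
  have hr : rt (vm (e, true)) = rt (vm (e, false)).
    apply/(fingraph.rootP sy)/connect1/existsP; exists e; rewrite eA /=.
    by rewrite !eqxx.
  apply/eqP; congr (g _); apply: val_inj => /=; exact: hr.
rewrite img card_imset // cardsT card_ffun card_sig /kc; congr (_ ^ _)%N.
by apply: eq_card => x; rewrite !inE.
Qed.

End Gen.

Section Gen2.
Variables (E V : finType) (vm : (E * bool)%type -> V).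

Lemma kc_all A (x0 : V) : (forall x y, connect (adj_in vm A) x y) -> kc vm A = 1%N.
Proof.
move=> h; rewrite /kc (_ : [set x | _] = [set fingraph.root (adj_in vm A) x0]) ?cards1 //.
apply/setP => x; rewrite !inE; apply/idP/idP => [/eqP <-|/eqP ->].
  by apply/eqP/(fingraph.rootP (csym vm A)).
by rewrite (fingraph.root_root (csym vm A)).
Qed.

Lemma kc_set0 : kc vm set0 = #|V|.
Proof.
rewrite /kc -cardsT; apply: eq_card => x; rewrite !inE; apply/eqP.
have : connect (adj_in vm set0) x (fingraph.root (adj_in vm set0) x) by exact: fingraph.connect_root.
apply: (@connect_ind_gen _ _ (fun z => z = x)) => // y z _ /existsP[e].
by rewrite inE.
Qed.
End Gen2.

Section Planar.
Variable G : planar_map.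
Local Notation D := ((Ed G * bool)%type).
Local Notation rt := (@Defs.rot G).

Lemma vert_rot (d : D) : vert (rt d) = vert d.
Proof. by apply/esym/(vert_orbits d (rt d)); exact: fconnect1. Qed.

Lemma dflipK (d : D) : dflip (dflip d) = d.
Proof. by case: d => x y; rewrite /dflip /= negbK. Qed.

Lemma face_rot (d : D) : face (rt d) = face (dflip d).
Proof.
have -> : rt d = face_perm (rt) (dflip d) by rewrite /face_perm dflipK.
by apply/esym/(face_orbits (dflip d)); exact: fconnect1.
Qed.

Lemma even_rot (P : pred D) (f : D -> bool) :
  (forall d, P (rt d) = P d) ->
  ~~ odd (\sum_(d | P d) (f d != f (rt d) : nat)).
Proof.
move=> Prot.
have e1 : \sum_(d | P d) (f (rt d) : nat) = \sum_(d | P d) (f d : nat).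
  rewrite [RHS](reindex_inj (h := rt)) /=; last exact: perm_inj.
  by apply: eq_bigl => d; rewrite Prot.
have e2 : \sum_(d | P d) (f d != f (rt d) : nat) +
          (\sum_(d | P d) (f d && f (rt d) : nat)).*2 =
          (\sum_(d | P d) (f d : nat)).*2.
  rewrite -!addnn -{2}e1 -!big_split /=.
  by apply: eq_bigr => d _; case: (f d); case: (f (rt d)).
by apply/negP => h; have := odd_double (\sum_(d | P d) (f d : nat)); rewrite -e2 oddD odd_double addbF h.
Qed.

Lemma planar_parity (w : {set Ed G}) e : e \notin w ->
  ~~ connect (adj_in (@vert G) w) (vert (e, true)) (vert (e, false)) ->
  connect (adj_in (@face G) (~: w :\ e)) (face (e, true)) (face (e, false)).
Proof.
move=> ew nv; apply/negP => nf.
set C := connect (adj_in (@vert G) w) (vert (e, true)).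
set B := adj_in (@face G) (~: w :\ e).
pose inS (d : D) := connect B (face (e, true)) (face d).
pose P (d : D) := C (vert d).
pose bnd (d : D) := inS d != inS (dflip d).
have ev := even_rot inS (P := P) (fun d => congr1 C (vert_rot d)).
have ev' : ~~ odd (\sum_(d | P d) (bnd d : nat)).
  by move: ev; rewrite (eq_bigr (fun d => (bnd d : nat))) // => d _; rewrite /bnd /inS face_rot.
move: ev'; apply/negP; rewrite negbK.
rewrite big_mkcond /= (_ : \sum_(d : D) _ = \sum_(e' : Ed G) \sum_(b : bool)
   (if P (e', b) then (bnd (e', b) : nat) else 0%N)); last first.
  by rewrite pair_bigA; apply: eq_bigr => -[].
rewrite (bigD1 e) //= big_bool /= oddD.
have Pt : P (e, true) by rewrite /P /C connect0.
have Pf : P (e, false) = false by apply/negbTE.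
have bt : bnd (e, true).
  by rewrite /bnd /inS /dflip /= connect0 /=; exact/negP.
rewrite Pt Pf bt /=.
apply: (big_ind (fun n => ~~ odd n)) => //.
  by move=> m n; rewrite oddD => /negbTE-> /negbTE->.
move=> i ie; rewrite big_bool /=.
have bf : bnd (i, false) = bnd (i, true) by rewrite /bnd /dflip /= eq_sym.
rewrite bf.
case iw : (i \in w).
  have -> : P (i, false) = P (i, true).
    rewrite /P /C; apply/esym/(same_connect_r (csym _ _)).
    apply: connect1; apply/existsP; exists i; rewrite iw !eqxx //.
  by case: (P (i, true)); rewrite ?addnn ?odd_double.
have -> : bnd (i, true) = false.
  rewrite /bnd /inS /dflip /=; apply/negbTE; rewrite negbK; apply/eqP.
  apply: (same_connect_r (csym _ _)); apply: connect1; apply/existsP; exists i.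
  by rewrite !inE iw ie !eqxx.
by case: (P (i, true)); case: (P (i, false)).
Qed.

Lemma nonempty_VF : (exists x0 : Vx G, True) /\ (exists u0 : Fc G, True).
Proof.
have eul := genus_zero G.
case: (covering G) => [[sv sf]|[_ hv hf]].
  have [d _] : exists d : D, True.
    have : (0 < #|Vx G| + #|Fc G|)%N by rewrite eul addn2.
    case: (posnP #|Vx G|) => [h0|/card_gt0P[v _]].
      rewrite h0 add0n => /card_gt0P[u _]; case: (sf u) => d _; by exists d.
    by case: (sv v) => d _; exists d.
  by split; [exists (vert d) | exists (face d)].
split.
  by have /card_gt0P[v _] : (0 < #|Vx G|)%N by rewrite hv.
by have /card_gt0P[v _] : (0 < #|Fc G|)%N by rewrite hf.
Qed.

Lemma kc_vert_full : kc (@vert G) [set: Ed G] = 1%N.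
Proof.
case: nonempty_VF => -[x0 _] _; apply: (kc_all x0); exact: connected.
Qed.

Local Notation cF := (connect (adj_in (@face G) [set: Ed G])).

Lemma cF_flip (d : D) : cF (face d) (face (dflip d)).
Proof.
apply: connect1; apply/existsP; exists d.1; rewrite inE /=.
by case: d => x [] /=; rewrite /dflip /= !eqxx ?orbT.
Qed.

Lemma cF_vert (d d' : D) : vert d = vert d' -> cF (face d) (face d').
Proof.
move/(vert_orbits d d').
apply: (@connect_ind_gen _ _ (fun z => cF (face d) (face z))) => // y z h /eqP <-.
by apply: connect_trans h _; rewrite face_rot; exact: cF_flip.
Qed.

Lemma kc_face_full : kc (@face G) [set: Ed G] = 1%N.
Proof.
case: nonempty_VF => _ [u0 _]; apply: (kc_all u0) => u u'.
case: (covering G) => [[sv sf]|[_ _ hf]]; last first.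
  have : (#|[set: Fc G]| <= 1)%N by rewrite cardsT hf.
  by move/card_le1_eqP => h; rewrite (h u u') ?inE.
case: (sf u) => d <-; case: (sf u') => d' <-.
have cv : connect (adj_in (@vert G) [set: Ed G]) (vert d) (vert d') by exact: connected.
suff : forall v, connect (adj_in (@vert G) [set: Ed G]) (vert d) v ->
  forall d'', vert d'' = v -> cF (face d) (face d'') by move=> /(_ _ cv d' erefl).
apply: (@connect_ind_gen _ _ (fun v => forall d', vert d' = v -> cF (face d) (face d'))).
  by move=> d'' /esym; exact: cF_vert.
move=> y z IH /existsP[e /andP[_ h]] d'' ed''.
case/orP: h => /andP[/eqP e1 /eqP e2].
- have h1 := IH _ e1.
  have h2 := connect_trans h1 (cF_flip (e, true)).
  apply: connect_trans h2 (cF_vert _); rewrite /dflip /= e2 ed'' //.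
- have h1 := IH _ e1.
  have h2 := connect_trans h1 (cF_flip (e, false)).
  apply: connect_trans h2 (cF_vert _); rewrite /dflip /= e2 ed'' //.
Qed.

Definition lhsE (w : {set Ed G}) := (kc (@face G) (~: w) + #|Vx G|)%N.
Definition rhsE (w : {set Ed G}) := (kc (@vert G) w + #|w| + 1)%N.

Lemma step_ineq (w : {set Ed G}) (e : Ed G) : e \notin w ->
  (lhsE (e |: w) + rhsE w <= lhsE w + rhsE (e |: w))%N.
Proof.
move=> ew; rewrite /lhsE /rhsE cardsU1 ew add1n.
have eC : ~: (e |: w) = ~: w :\ e by rewrite setCU setIC setDE.
have eC2 : ~: w = e |: (~: w :\ e) by rewrite setD1K // inE.
rewrite eC {2}eC2.
case cv : (connect (adj_in (@vert G) w) (vert (e, true)) (vert (e, false))).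
  rewrite (kc_add_eq cv).
  have := kc_add_le (@face G) (~: w :\ e) e; lia.
rewrite (kc_add_eq (planar_parity ew (negbT cv))).
have := kc_add_le (@vert G) w e; lia.
Qed.

Lemma mono_ineq (w1 w2 : {set Ed G}) : w1 \subset w2 ->
  (lhsE w2 + rhsE w1 <= lhsE w1 + rhsE w2)%N.
Proof.
move=> sub; have [n hn] : exists n, #|w2 :\: w1| = n by eexists.
elim: n w1 sub hn => [|n IH] w1 sub hn.
  have -> : w2 = w1.
    apply/eqP; rewrite eqEsubset sub andbT; apply/subsetP => x xw2.
    apply/negPn/negP => xw1.
    have : x \in w2 :\: w1 by rewrite inE xw1 xw2.
    by move/cards0_eq: hn => ->; rewrite inE.
  lia.
have /card_gt0P[e ed] : (0 < #|w2 :\: w1|)%N by rewrite hn.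
move: ed; rewrite inE => /andP[ew1 ew2].
have sub' : e |: w1 \subset w2 by rewrite subUset sub1set ew2 sub.
have hn' : #|w2 :\: (e |: w1)| = n.
  have := cardsD1 e (w2 :\: w1); rewrite inE ew1 ew2 hn /= setDDl setUC add1n.
  by move=> -[].
have := IH _ sub' hn'; have := step_ineq ew1; lia.
Qed.

Lemma euler_sub (w : {set Ed G}) :
  (kc (@face G) (~: w) + #|Vx G| = kc (@vert G) w + #|w| + 1)%N.
Proof.
have h1 := mono_ineq (sub0set w).
have h2 := mono_ineq (subsetT w).
have e0 : lhsE set0 = rhsE set0.
  by rewrite /lhsE /rhsE setC0 kc_face_full kc_set0 cards0 addn0 addnC.
have eT : lhsE setT = rhsE setT.
  rewrite /lhsE /rhsE setCT kc_set0 kc_vert_full cardsT; have := genus_zero G; lia.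

rewrite /lhsE /rhsE in h1 h2 e0 eT *; lia.
Qed.
End Planar.

Local Open Scope ring_scope.

Section Main.
Variables (R : realType) (G : planar_map) (Q Q' : seq R[i]) (a b : R).

Lemma jw_eq (s : spinV G Q) (s' : spinF G Q') (w : {set Ed G}) :
  joint_weight a b s s' w =
  if goodf (@vert G) w s && goodf (@face G) (~: w) s'
  then a ^+ #|w| * b ^+ #|~: w| else 0.
Proof.
have E1 : [disjoint w & etaV s] = goodf (@vert G) w s.
  rewrite disjoint_subset; apply/subsetP/forallP => [h e|h e ew].
    by apply/implyP => ew; have := h e ew; rewrite !inE negbK.
  by have := h e; rewrite ew /= !inE negbK.
have E2 : (etaF s' \subset w) = goodf (@face G) (~: w) s'.
  apply/subsetP/forallP => [h e|h e].
    apply/implyP; rewrite inE => ew; apply/negPn/negP => ne.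
    have : e \in etaF s' by rewrite inE.
    by move/h; rewrite (negbTE ew).
  rewrite inE => ne; apply/negPn/negP => ew.
  have := implyP (h e); rewrite inE ew => /(_ isT).
  by rewrite (negbTE ne).
rewrite /joint_weight -E1 -E2.
case g2 : (etaF s' \subset w); case g1 : [disjoint w & etaV s]; rewrite ?andbF ?andbT //=.
have dis : [disjoint etaV s & etaF s'].
  rewrite disjoint_subset; apply/subsetP => e ev; rewrite inE; apply/negP => ef.
  have ew := subsetP g2 e ef.
  by move: g1; rewrite disjoint_subset => /subsetP /(_ e ew); rewrite inE ev.
have sub2 : etaV s \subset ~: w.
  apply/subsetP => e ev; rewrite inE; apply/negP => ew.
  by move: g1; rewrite disjoint_subset => /subsetP /(_ e ew); rewrite inE ev.
rewrite dis.
have cw := cardsID (etaF s') w; rewrite (setIidPr g2) in cw.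
have cb := cardsID (etaV s) (~: w); rewrite (setIidPr sub2) in cb.
rewrite -cw -cb !exprD.
by rewrite -!mulrA; congr (_ * _); rewrite mulrCA; congr (_ * _); rewrite mulrCA.
Qed.


Lemma marg_eq (w : {set Ed G}) :
  \sum_(s : spinV G Q) \sum_(s' : spinF G Q') joint_weight a b s s' w =
  (#|[set s : spinV G Q | goodf (@vert G) w s]| *
   #|[set s' : spinF G Q' | goodf (@face G) (~: w) s']|)%:R * (a ^+ #|w| * b ^+ #|~: w|).
Proof.
set c := a ^+ #|w| * b ^+ #|~: w|.
set A := [set s : spinV G Q | _]. set B := [set s' : spinF G Q' | _].
transitivity (\sum_(s in A) \sum_(s' in B) c).
  rewrite [RHS]big_mkcond; apply: eq_bigr => s _; rewrite inE.
  case g : (goodf (@vert G) w s).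
    by rewrite [RHS]big_mkcond; apply: eq_bigr => s' _; rewrite jw_eq inE g.
  by rewrite big1 // => s' _; rewrite jw_eq g.
rewrite (eq_bigr (fun _ => c *+ #|B|)); last by move=> s _; rewrite sumr_const.
rewrite sumr_const.
by rewrite -mulrnA mulr_natl mulnC.
Qed.

End Main.

Theorem proposition2p1 (R : realType) (G : planar_map) (q q' : nat)
    (Q Q' : seq R[i]) (a b : R) :
  (1 <= q)%N -> (1 <= q')%N ->
  uniq Q -> size Q = q -> (forall x, x \in Q -> - x \in Q) ->
  uniq Q' -> size Q' = q' -> (forall x, x \in Q' -> - x \in Q') ->
  0 < a <= 1 -> 0 < b <= 1 -> a + b = 1 ->
  let p := q'%:R / (q'%:R + a^-1 - 1) in
  forall w : {set Ed G},
    omega_marginal Q Q' a b w = rc_law (q * q') p w.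
Proof.
move=> q1 q'1 uQ sQ _ uQ' sQ' _ /andP[a0 a1] /andP[b0 b1] ab p w.
pose m (w : {set Ed G}) := \sum_(s : spinV G Q) \sum_(s' : spinF G Q') joint_weight a b s s' w.
have jt : joint_total G Q Q' a b = \sum_w' m w'.
  rewrite /joint_total /m; under eq_bigr do rewrite exchange_big; exact: exchange_big.
have mform : forall w, m w = (q ^ ncomp w * q' ^ kc (@face G) (~: w))%:R * (a ^+ #|w| * b ^+ #|~: w|).
  move=> w'; rewrite /m marg_eq !count_good !card_seq_sub // sQ sQ'.
  by [].
set K := a * q'%:R + b.
have Kpos : 0 < K.
  by rewrite /K; apply: ltr_pwDr => //; apply: mulr_ge0; [exact: ltW | exact: ler0n].
have K0 : K != 0 by rewrite gt_eqF.
have a0' : a != 0 by rewrite gt_eqF.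
have hp : p = a * q'%:R / K.
  have hb : b = 1 - a by lra.
  rewrite /p /K hb; field.
  by rewrite -hb K0 a0'.
have h1p : 1 - p = b / K.
  rewrite hp; apply: (mulIf K0); rewrite mulrBl !mulfVK // mul1r /K; lra.
have key : forall w, rc_weight (q * q') p w * (q'%:R * K ^+ #|Ed G|) = m w * q'%:R ^+ #|Vx G|.
  move=> w'; rewrite /rc_weight mform h1p hp -(cardsC w') exprD !expr_div_n.
  have eN := euler_sub w'.
  have -> : (q ^ ncomp w' * q' ^ kc (@face G) (~: w'))%:R * (a ^+ #|w'| * b ^+ #|~: w'|) * q'%:R ^+ #|Vx G|
     = (q%:R ^+ ncomp w' * q'%:R ^+ ncomp w' * q'%:R ^+ #|w'| * q'%:R) * (a ^+ #|w'| * b ^+ #|~: w'|) :> R.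
    have eq1 : q'%:R ^+ kc (@face G) (~: w') * q'%:R ^+ #|Vx G| =
       q'%:R ^+ ncomp w' * q'%:R ^+ #|w'| * q'%:R :> R.
      by rewrite -exprD eN !exprD expr1.
    rewrite natrM !natrX.
    transitivity (q%:R ^+ ncomp w' * (a ^+ #|w'| * b ^+ #|~: w'|) *
      (q'%:R ^+ kc (@face G) (~: w') * q'%:R ^+ #|Vx G|) : R); first ring.
    rewrite eq1; ring.
  rewrite natrM exprMn !exprMn.
  by field; rewrite !expf_neq0.
have q'0 : q'%:R != 0 :> R by rewrite pnatr_eq0 -lt0n.
have D0 : q'%:R * K ^+ #|Ed G| != 0 by rewrite mulf_neq0 // expf_neq0.
set C := q'%:R ^+ #|Vx G| / (q'%:R * K ^+ #|Ed G|).
have C0 : C != 0 by rewrite /C mulf_neq0 ?invr_eq0 // expf_neq0.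
have rcm : forall w', rc_weight (q * q') p w' = m w' * C.
  move=> w'; apply: (mulIf D0); rewrite key /C.
  by rewrite -mulrA mulfVK.
rewrite /omega_marginal jt /rc_law -/(m w).
rewrite [in RHS](eq_bigr (fun w' => m w' * C)); last by move=> w' _; exact: rcm.
by rewrite rcm -big_distrl /= invfM mulrACA divff // mulr1.
Qed.
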